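(* Let $m$ and $s$ be fixed positive integers and let $G$ be a graph on $n$ vertices. Suppose there is a partition of $V(G)$ into sets $V_1,\dots,V_s$ such that: (i) for each $i<s$ there is no path with $3$ vertices whose two endpoints both lie in $V_i$; (ii) there is no path with $m+1$ vertices whose endpoints lie in $V_i$ and $V_j$ for some $i\neq j$; (iii) $V_s$ is an independent set. Then $|E(G)|=O(n)$ (as $n\to\infty$, with the implied constant depending only on $m$ and $s$).
   Context: Paths are subgraphs; a path with $t$ vertices has $t-1$ edges. *)

(* Defs.v *)
From mathcomp Require Import all_boot.
Set Implicit Arguments. Unset Strict Implicit. Unset Printing Implicit Defensive.

Definition simple_graph (T : finType) (e : rel T) : Prop :=
  symmetric e /\ irreflexive e.

Definition edge_set (T : finType) (e : rel T) : {set {set T}} :=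
  [set A : {set T} | [exists x : T, exists y : T, e x y && (A == [set x; y])]].

(* x :: q is a path (as a subgraph: distinct vertices, consecutive adjacent);
   it has size q + 1 vertices, endpoints x and last x q. *)
Definition is_path (T : finType) (e : rel T) (x : T) (q : seq T) : bool :=
  path e x q && uniq (x :: q).

(* Main.v *)
Require Import Defs.
From mathcomp Require Import all_boot.

Definition hmap (T : finType) (e : rel T) (s : nat) (f : T -> 'I_s)
  (p : T * 'I_s) : {set T} :=
  match [pick w | e p.1 w && (f w == p.2)] with
  | Some w => [set p.1; w]
  | None => set0
  end.

Lemma hmap_key (T : finType) (e : rel T) (s : nat) (f : T -> 'I_s) :
  simple_graph e ->
  (forall (x : T) (q : seq T), is_path e x q -> size q = 2 ->
        (nat_of_ord (f x) < s.-1)%N -> f (last x q) <> f x) ->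
  forall x y, e x y -> (nat_of_ord (f x) < s.-1)%N ->
  @hmap _ e _ f (y, f x) = [set x; y].
Proof.
move=> [esym eirr] Hi x y exy lt.
rewrite /hmap /=.
case: pickP => [w /andP [eyw /eqP fw]|]; last first.
  by move=> /(_ x); rewrite esym exy eqxx.
have [-> | nwx] := eqVneq w x; first by rewrite setUC.
exfalso.
have Hp : is_path e x [:: y; w].
  rewrite /is_path /= exy eyw /= !inE !negb_or.
  have nxy : x != y by apply/eqP => Exy; move: exy; rewrite Exy eirr.
  have nyw : y != w by apply/eqP => Eyw; move: eyw; rewrite Eyw eirr.
  by rewrite nxy eq_sym nwx nyw.
by apply: (Hi x [:: y; w] Hp erefl lt).
Qed.

Theorem lemma3 :
  forall m s : nat, 0 < m -> 0 < s ->
  exists C : nat,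
  forall (T : finType) (e : rel T) (f : T -> 'I_s),
    simple_graph e ->
    (* (i) for each i < s, no 3-vertex path with both endpoints in V_i *)
    (forall (x : T) (q : seq T), is_path e x q -> size q = 2 ->
        (nat_of_ord (f x) < s.-1)%N -> f (last x q) <> f x) ->
    (* (ii) no (m+1)-vertex path with endpoints in different parts *)
    (forall (x : T) (q : seq T), is_path e x q -> size q = m ->
        f (last x q) = f x) ->
    (* (iii) V_s is independent *)
    (forall x y : T, nat_of_ord (f x) = s.-1 -> nat_of_ord (f y) = s.-1 ->
        ~~ e x y) ->
    (#|edge_set e| <= C * #|T|)%N.
Proof.
move=> m s _ s0; exists s => T e f Hg Hi _ Hiii.
have sub : edge_set e \subset [set @hmap _ e _ f p | p in [set: T * 'I_s]].
  apply/subsetP => A; rewrite inE => /existsP [x /existsP [y /andP [exy /eqP ->]]].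
  have [lt|ge] := ltnP (f x) s.-1.
    by apply/imsetP; exists (y, f x); rewrite ?inE // (@hmap_key _ _ _ _ Hg Hi _ _ exy lt).
  have fx : nat_of_ord (f x) = s.-1.
    by apply/eqP; rewrite eqn_leq ge andbT -ltnS prednK.
  have lt : (nat_of_ord (f y) < s.-1)%N.
    have : (nat_of_ord (f y) <= s.-1)%N by rewrite -ltnS prednK.
    rewrite leq_eqVlt => /orP [/eqP fy|//].
    by move: (Hiii x y fx fy); rewrite exy.
  have eyx : e y x by case: Hg => esym _; rewrite esym.
  by apply/imsetP; exists (x, f y); rewrite ?inE // (@hmap_key _ _ _ _ Hg Hi _ _ eyx lt) setUC.
apply: (leq_trans (subset_leq_card sub)).
apply: (leq_trans (leq_imset_card _ _)).
by rewrite cardsT card_prod card_ord mulnC.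
Qed.
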